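(* Let $\Gamma^{-1}$ be an irreducible $n\times n$ $M$-matrix (the inverse of a strictly positive definite matrix $\Gamma$), and suppose that $(\Gamma^{-1})_{i,j}=0$ for some $i\neq j$. Let $k=\min\{l>1: (\Gamma^{-l})_{i,j}\neq0\}$, where $\Gamma^{-l}=(\Gamma^{-1})^l$. Then $k\le n-1$ and $(\Gamma^{-k})_{i,j}=(-1)^k\,|(\Gamma^{-k})_{i,j}|$.
   Context: A non-singular matrix $A$ is an $M$-matrix if all entries of $A^{-1}$ are non-negative and $A_{i,j}\le0$ for $i\ne j$. A symmetric matrix is irreducible if it is not a direct sum of square matrices. *)

(* Defs.v *)
From HB Require Import structures.
From mathcomp Require Import all_boot all_order all_algebra.
Set Implicit Arguments. Unset Strict Implicit. Unset Printing Implicit Defensive.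
Import Order.TTheory GRing.Theory Num.Theory.
Local Open Scope ring_scope.

Definition mxpow (R : pzRingType) (n : nat) (A : 'M[R]_n) (l : nat) : 'M[R]_n :=
  iter l (mulmx A) 1%:M.

Definition sym_posdef (R : realFieldType) (n : nat) (G : 'M[R]_n) : Prop :=
  G^T = G /\ forall x : 'cV[R]_n, x != 0 -> 0 < (x^T *m G *m x) 0 0.

Definition Mmatrix (R : realFieldType) (n : nat) (A : 'M[R]_n) : Prop :=
  [/\ A \in unitmx,
      forall i j, 0 <= invmx A i j &
      forall i j, i != j -> A i j <= 0].

(* Irreducible (symmetric) matrix: it is not, up to a simultaneous
   permutation of rows and columns, a direct sum of two square blocks;
   i.e. no proper nonempty index set S decouples from its complement. *)
Definition irreducible_mx (R : pzRingType) (n : nat) (A : 'M[R]_n) : Prop :=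
  forall S : {set 'I_n},
    (forall i j, i \in S -> j \notin S -> A i j = 0) ->
    S = set0 \/ S = [set: 'I_n].

(* Main.v *)
Require Import Defs.
From HB Require Import structures.
From mathcomp Require Import all_boot all_order all_algebra.
From mathcomp Require Import ring zify.
Set Implicit Arguments. Unset Strict Implicit. Unset Printing Implicit Defensive.
Import Order.TTheory GRing.Theory Num.Theory.
Local Open Scope ring_scope.

Definition stepD (R : pzRingType) n (A : 'M[R]_n) (X : {set 'I_n}) : {set 'I_n} :=
  X :|: [set v | [exists w in X, (v != w) && (A v w != 0)]].
Definition Dset (R : pzRingType) n (A : 'M[R]_n) (j : 'I_n) m := iter m (stepD A) [set j].
Definition Dprev (R : pzRingType) n (A : 'M[R]_n) (j : 'I_n) m :=
  if m is m'.+1 then Dset A j m' else set0.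

Lemma in_step (R : pzRingType) n (A : 'M[R]_n) (X : {set 'I_n}) v :
  (v \in stepD A X) = (v \in X) || [exists w in X, (v != w) && (A v w != 0)].
Proof. by rewrite !inE. Qed.

Lemma adj_step (R : pzRingType) n (A : 'M[R]_n) (X : {set 'I_n}) v w :
  w \in X -> v != w -> A v w != 0 -> v \in stepD A X.
Proof.
move=> wX vw Avw; rewrite in_step; apply/orP; right; apply/existsP; exists w.
by rewrite wX vw Avw.
Qed.

Lemma Dprev_adj (R : pzRingType) n (A : 'M[R]_n) j m v w :
  w \in Dprev A j m -> v != w -> A v w != 0 -> v \in Dset A j m.
Proof. by case: m => [|m] /=; [rewrite inE | exact: adj_step]. Qed.

Lemma Dmono (R : pzRingType) n (A : 'M[R]_n) j m :
  Dset A j m \subset Dset A j m.+1.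
Proof. exact: subsetUl. Qed.

Lemma Dmono_le (R : pzRingType) n (A : 'M[R]_n) j m m' :
  (m <= m')%N -> Dset A j m \subset Dset A j m'.
Proof.
move=> /subnK <-; elim: (m' - m)%N => [|d IH]; rewrite ?add0n //.
rewrite addSn; exact: subset_trans IH (Dmono _ _ _).
Qed.

Lemma part_a (R : pzRingType) n (A : 'M[R]_n) j m v :
  v \notin Dset A j m -> mxpow A m v j = 0.
Proof.
elim: m v => [|m IH] v vD.
  rewrite /mxpow /= mxE. rewrite /Dset /= inE in vD.
  by rewrite (negbTE vD) mulr0n.
rewrite /mxpow iterS -/(mxpow A m) mxE; apply: big1 => w _.
case: (eqVneq v w) => [<-|vw].
  rewrite IH ?mulr0 //; apply: contra vD; exact: (subsetP (Dmono _ _ _)).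
case wD: (w \in Dset A j m).
  have -> : A v w = 0.
    by apply/eqP; apply: contraNT vD => Avw; exact: adj_step wD vw Avw.
  by rewrite mul0r.
by rewrite IH ?mulr0 // wD.
Qed.

Lemma part_b (R : realFieldType) n (A : 'M[R]_n) j
  (off : forall v w, v != w -> A v w <= 0) m v :
  v \in Dset A j m -> v \notin Dprev A j m -> 0 < (-1) ^+ m * mxpow A m v j.
Proof.
elim: m v => [|m IH] v vD vP.
  rewrite /Dset /= inE in vD; move/eqP: vD ->.
  by rewrite /mxpow /= mxE eqxx expr0 mul1r mulr1n ltr01.
rewrite /= in vP.
have vD' := vD; rewrite /Dset iterS -/(Dset A j m) in_step (negbTE vP) /= in vD'.
case/existsP: vD' => w /andP [wD /andP [vw Avw]].
have hw : w \notin Dprev A j m.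
  by apply: contra vP => wP; exact: Dprev_adj wP vw Avw.
have key : forall u, u \in Dset A j m -> u \notin Dprev A j m -> v != u ->
    (-1) ^+ m.+1 * (A v u * mxpow A m u j) = (- A v u) * ((-1) ^+ m * mxpow A m u j).
  by move=> u _ _ _; rewrite exprS; ring.
have term_ge0 : forall u, 0 <= (-1) ^+ m.+1 * (A v u * mxpow A m u j).
  move=> u; case: (eqVneq v u) => [<-|vu].
    by rewrite (part_a vP) !mulr0.
  case uP: (u \in Dprev A j m).
    have -> : A v u = 0.
      by apply/eqP; apply: contraNT vP => Avu; exact: Dprev_adj uP vu Avu.
    by rewrite mul0r mulr0.
  case uD: (u \in Dset A j m); last by rewrite (part_a (negbT uD)) !mulr0.
  rewrite key ?uD ?uP //; apply: mulr_ge0; first by rewrite oppr_ge0 off.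
  exact: ltW (IH u uD (negbT uP)).
rewrite /mxpow iterS -/(mxpow A m) mxE mulr_sumr (bigD1 w) //=.
apply: ltr_pwDl.
  rewrite key //; apply: mulr_gt0; last exact: IH.
  by rewrite oppr_gt0 lt_neqAle Avw off.
by apply: sumr_ge0 => u _; exact: term_ge0.
Qed.

Lemma card_lemma (R : pzRingType) n (A : 'M[R]_n) j m :
  (m < #|Dset A j m|)%N \/ stepD A (Dset A j m) = Dset A j m.
Proof.
elim: m => [|m IH]; first by left; rewrite /Dset /= cards1.
case: (eqVneq (stepD A (Dset A j m)) (Dset A j m)) => [e|ne].
  right; have E : Dset A j m.+1 = Dset A j m by rewrite /Dset iterS -/(Dset A j m) e.
  by rewrite E.
case: IH => [lt|e]; last by rewrite e eqxx in ne.
left; have pr : Dset A j m \proper Dset A j m.+1.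
  by rewrite properEneq Dmono andbT eq_sym.
exact: leq_ltn_trans lt (proper_card pr).
Qed.

Lemma sign_lemma (R : realFieldType) k (x : R) :
  0 < (-1) ^+ k * x -> x != 0 /\ x = (-1) ^+ k * `|x|.
Proof.
move=> h; split.
  by apply: contraTneq h => ->; rewrite mulr0 ltxx.
have -> : `|x| = (-1) ^+ k * x.
  by rewrite -(gtr0_norm h) normrM normrX normrN1 expr1n mul1r.
by rewrite mulrA -exprD addnn -mul2n exprM sqrrN expr1n expr1n mul1r.
Qed.

Theorem lemma2p2 (R : realFieldType) (n : nat) (G : 'M[R]_n) (i j : 'I_n) :
  sym_posdef G ->
  Mmatrix (invmx G) ->
  irreducible_mx (invmx G) ->
  i != j ->
  invmx G i j = 0 ->
  exists k : nat,
    [/\ (1 < k)%N,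
        mxpow (invmx G) k i j != 0,
        (forall l : nat, (1 < l < k)%N -> mxpow (invmx G) l i j = 0),
        (k <= n.-1)%N &
        mxpow (invmx G) k i j = (-1) ^+ k * `|mxpow (invmx G) k i j| ].
Proof.
move=> _ [_ _ off] irr ij Aij.
set A := invmx G in off irr Aij *.
have jD : forall m, j \in Dset A j m.
  by move=> m; apply: (subsetP (Dmono_le A j (leq0n m))); rewrite /Dset /= inE.
have n0 : (0 < n)%N by apply: leq_ltn_trans (leq0n i) (ltn_ord i).
have iD : i \in Dset A j n.-1.
  case: (card_lemma A j n.-1) => [lt|cl].
    have : Dset A j n.-1 = setT.
      apply/eqP; rewrite eqEcard subsetT cardsT card_ord.
      by move: lt n0; clear; lia.
    by move=> ->; rewrite inE.
  have prem : forall a b, a \in ~: Dset A j n.-1 -> b \notin ~: Dset A j n.-1 -> A a b = 0.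
    move=> a b; rewrite !inE negbK => ha hb.
    case: (eqVneq a b) => [eab|ab]; first by rewrite eab hb in ha.
    apply/eqP; apply: contraNT ha => Aab; rewrite -cl; exact: adj_step hb ab Aab.
  case: (irr _ prem) => e.
    by have := in_setC i (Dset A j n.-1); rewrite e inE => /esym/negbFE.
  by have := in_setC j (Dset A j n.-1); rewrite e inE jD.
have ex : exists m, i \in Dset A j m by exists n.-1.
case: (ex_minnP ex) => k ik kmin.
have kle : (k <= n.-1)%N by exact: kmin.
case: k ik kmin kle => [|[|k]] ik kmin kle.
- by rewrite /Dset /= inE (negbTE ij) in ik.
- rewrite /Dset /= in_step inE (negbTE ij) /= in ik.
  case/existsP: ik => w /andP [] /[!inE] /eqP -> /andP [_].
  by rewrite Aij eqxx.
have iP : i \notin Dprev A j k.+2.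
  by apply/negP => /kmin; rewrite ltnn.
have [nz sg] := sign_lemma (part_b off ik iP).
exists k.+2; split => //.
move=> l /andP [_ lk]; apply: part_a; apply/negP => /kmin.
by rewrite leqNgt lk.
Qed.
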